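(* For any set $\mathcal{A}$ of Left dead-ends, the set $\operatorname{up}(\mathcal{A})$ is simply closed.
   Context: Games are finite partizan games; $o(G)$ is the misère outcome class (ordered $\mathscr{L}>\mathscr{N}>\mathscr{R}$, $\mathscr{L}>\mathscr{P}>\mathscr{R}$). A universe is a set of games closed under options, disjunctive sums, conjugates, and forming $\{\mathscr{G}^L\mid\mathscr{G}^R\}$ from nonempty finite subsets of it; $G\geq_\mathcal{U}H$ means $o(G+X)\geq o(H+X)$ for all $X\in\mathcal{U}$. A set of games is simply closed if it is closed under taking options and under disjunctive sums. A Left dead-end is a game all of whose subpositions have no Left option; $\mathcal{L}$ is the set of Left dead-ends. For Left dead-ends, $G\geq H$ means $G\geq_\mathcal{U}H$ for every universe $\mathcal{U}$. $\operatorname{cl}(\mathcal{A})$ is the smallest simply closed set containing $\mathcal{A}$, and $\operatorname{up}(\mathcal{A})=\{G\in\mathcal{L}:G\geq H\text{ for some }H\in\operatorname{cl}(\mathcal{A})\}$. *)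

(* Defs.v *)
From Stdlib Require Import List.
Import ListNotations.

Inductive game : Type := Mk : list game -> list game -> game.

Definition leftOpts (G : game) : list game := let 'Mk L _ := G in L.
Definition rightOpts (G : game) : list game := let 'Mk _ R := G in R.

Definition is_option (H G : game) : Prop := In H (leftOpts G) \/ In H (rightOpts G).

Fixpoint gadd (G : game) : game -> game :=
  fix gaddG (H : game) : game :=
    match G, H with
    | Mk GL GR, Mk HL HR =>
        Mk (map (fun x => gadd x H) GL ++ map gaddG HL)
           (map (fun x => gadd x H) GR ++ map gaddG HR)
    end.

Fixpoint gneg (G : game) : game :=
  match G with Mk L R => Mk (map gneg R) (map gneg L) end.

(** Misère play: a player who cannot move on their turn wins.
    [lf G] : Left wins G moving first (Left has no move, or Left moves to some
    G^L on which Right, to move, has at least one move and every Right move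
    G^LR is again a first-player Left win).  [rf] is the symmetric notion. *)
Fixpoint lf (G : game) : bool :=
  match G with
  | Mk [] _ => true
  | Mk L _ => existsb (fun GL => match GL with
                 | Mk _ [] => false
                 | Mk _ R' => forallb lf R' end) L
  end.

Fixpoint rf (G : game) : bool :=
  match G with
  | Mk _ [] => true
  | Mk _ R => existsb (fun GR => match GR with
                 | Mk [] _ => false
                 | Mk L' _ => forallb rf L' end) R
  end.

Inductive outcome : Type := oL | oN | oP | oR.

(** o(G): L = Left wins whoever starts, N = first player wins,
    P = second player wins, R = Right wins whoever starts. *)
Definition o (G : game) : outcome :=
  match lf G, rf G with
  | true, false => oL
  | true, true => oN
  | false, false => oP
  | false, true => oR
  end.

(** Partial order on outcomes: L > N > R, L > P > R (N, P incomparable). *)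
Definition outcome_le (a b : outcome) : Prop :=
  match a, b with
  | oR, _ => True
  | _, oL => True
  | oN, oN => True
  | oP, oP => True
  | _, _ => False
  end.

Definition gset := game -> Prop.

Definition universe (U : gset) : Prop :=
  (forall G H, U G -> is_option H G -> U H) /\
  (forall G H, U G -> U H -> U (gadd G H)) /\
  (forall G, U G -> U (gneg G)) /\
  (forall L R, L <> [] -> R <> [] ->
     (forall x, In x L -> U x) -> (forall x, In x R -> U x) -> U (Mk L R)).

Definition ge_in (U : gset) (G H : game) : Prop :=
  forall X, U X -> outcome_le (o (gadd H X)) (o (gadd G X)).

Inductive left_dead_end : game -> Prop :=
| lde_intro : forall R, (forall x, In x R -> left_dead_end x) ->
                        left_dead_end (Mk [] R).

Definition dge (G H : game) : Prop :=
  forall U, universe U -> ge_in U G H.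

Definition simply_closed (S : gset) : Prop :=
  (forall G H, S G -> is_option H G -> S H) /\
  (forall G H, S G -> S H -> S (gadd G H)).

Definition cl (A : gset) : gset :=
  fun G => forall S, simply_closed S -> (forall x, A x -> S x) -> S G.

Definition up (A : gset) : gset :=
  fun G => left_dead_end G /\ exists H, cl A H /\ dge G H.

(* Main.v *)
Require Import Defs.
From Stdlib Require Import List Classical Lia Bool Arith Wf_nat.
Import ListNotations.

Fixpoint game_ind' (P : game -> Prop)
  (f : forall L R, (forall x, In x L -> P x) -> (forall x, In x R -> P x) -> P (Mk L R))
  (g : game) : P g :=
  match g with Mk L R => f L R
    ((fix aux (l : list game) : forall x, In x l -> P x :=
       match l with [] => fun x H => False_ind _ H
       | y :: l' => fun x H => match H with
            | or_introl e => eq_ind y P (game_ind' P f y) x e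
            | or_intror H' => aux l' x H' end end) L)
    ((fix aux (l : list game) : forall x, In x l -> P x :=
       match l with [] => fun x H => False_ind _ H
       | y :: l' => fun x H => match H with
            | or_introl e => eq_ind y P (game_ind' P f y) x e
            | or_intror H' => aux l' x H' end end) R)
  end.

Lemma game_ext G : G = Mk (leftOpts G) (rightOpts G).
Proof. destruct G; reflexivity. Qed.

Lemma lo_add a b : leftOpts (gadd a b) = map (fun x => gadd x b) (leftOpts a) ++ map (gadd a) (leftOpts b).
Proof. destruct a, b; reflexivity. Qed.
Lemma ro_add a b : rightOpts (gadd a b) = map (fun x => gadd x b) (rightOpts a) ++ map (gadd a) (rightOpts b).
Proof. destruct a, b; reflexivity. Qed.

Lemma char W : (lf W = true <-> leftOpts W = [] \/ exists w, In w (leftOpts W) /\ rf w = false)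
  /\ (rf W = true <-> rightOpts W = [] \/ exists w, In w (rightOpts W) /\ lf w = false).
Proof.
  induction W as [L R IHL IHR] using game_ind'. cbn [leftOpts rightOpts]. split.
  - destruct L as [|g L'].
    + simpl. tauto.
    + change (lf (Mk (g :: L') R)) with (existsb (fun GL => match GL with
                 | Mk _ [] => false
                 | Mk _ R' => forallb lf R' end) (g :: L')).
      rewrite existsb_exists. split.
      * intros [w [Hw Hf]]. right. exists w. split; auto.
        destruct (rf w) eqn:E; auto. exfalso.
        destruct (IHL w Hw) as [_ [Hr _]].
        destruct (Hr E) as [Hn | [w' [Hw' Hl]]];
        destruct w as [wl wr]; cbn [rightOpts] in *; subst; try discriminate.
        destruct wr as [|z wr]; try discriminate.
        rewrite forallb_forall in Hf. rewrite (Hf w' Hw') in Hl; discriminate.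
      * intros [Hn | [w [Hw Hf]]]; [discriminate|]. exists w. split; auto.
        destruct (IHL w Hw) as [_ Hr].
        destruct w as [wl wr]; cbn [rightOpts] in *.
        destruct wr as [|z wr].
        { rewrite (proj2 Hr (or_introl eq_refl)) in Hf; discriminate. }
        apply forallb_forall. intros w' Hw'.
        destruct (lf w') eqn:E; auto. exfalso.
        rewrite (proj2 Hr (or_intror (ex_intro _ w' (conj Hw' E)))) in Hf; discriminate.
  - destruct R as [|g R'].
    + simpl. tauto.
    + change (rf (Mk L (g :: R'))) with (existsb (fun GR => match GR with
                 | Mk [] _ => false
                 | Mk L' _ => forallb rf L' end) (g :: R')).
      rewrite existsb_exists. split.
      * intros [w [Hw Hf]]. right. exists w. split; auto.
        destruct (lf w) eqn:E; auto. exfalso.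
        destruct (IHR w Hw) as [[Hr _] _].
        destruct (Hr E) as [Hn | [w' [Hw' Hl]]];
        destruct w as [wl wr]; cbn [leftOpts] in *; subst; try discriminate.
        destruct wl as [|z wl]; try discriminate.
        rewrite forallb_forall in Hf. rewrite (Hf w' Hw') in Hl; discriminate.
      * intros [Hn | [w [Hw Hf]]]; [discriminate|]. exists w. split; auto.
        destruct (IHR w Hw) as [Hr _].
        destruct w as [wl wr]; cbn [leftOpts] in *.
        destruct wl as [|z wl].
        { rewrite (proj2 Hr (or_introl eq_refl)) in Hf; discriminate. }
        apply forallb_forall. intros w' Hw'.
        destruct (rf w') eqn:E; auto. exfalso.
        rewrite (proj2 Hr (or_intror (ex_intro _ w' (conj Hw' E)))) in Hf; discriminate.
Qed.
Lemma lf_false W : lf W = false <-> leftOpts W <> [] /\ forall w, In w (leftOpts W) -> rf w = true.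
Proof.
  destruct (char W) as [H _]. split.
  - intros E. split.
    + intros Hn. rewrite (proj2 H (or_introl Hn)) in E; discriminate.
    + intros w Hw. destruct (rf w) eqn:Ew; auto.
      rewrite (proj2 H (or_intror (ex_intro _ w (conj Hw Ew)))) in E; discriminate.
  - intros [Hn Hall]. destruct (lf W) eqn:E; auto.
    destruct (proj1 H eq_refl) as [Hx | [w [Hw Hr]]]; [contradiction|].
    rewrite (Hall w Hw) in Hr; discriminate.
Qed.

Lemma rf_false W : rf W = false <-> rightOpts W <> [] /\ forall w, In w (rightOpts W) -> lf w = true.
Proof.
  destruct (char W) as [_ H]. split.
  - intros E. split.
    + intros Hn. rewrite (proj2 H (or_introl Hn)) in E; discriminate.
    + intros w Hw. destruct (lf w) eqn:Ew; auto.
      rewrite (proj2 H (or_intror (ex_intro _ w (conj Hw Ew)))) in E; discriminate.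
  - intros [Hn Hall]. destruct (rf W) eqn:E; auto.
    destruct (proj1 H eq_refl) as [Hx | [w [Hw Hr]]]; [contradiction|].
    rewrite (Hall w Hw) in Hr; discriminate.
Qed.

Lemma gadd_assoc a b c : gadd (gadd a b) c = gadd a (gadd b c).
Proof.
  revert b c. induction a as [aL aR IHaL IHaR] using game_ind'. intros b.
  induction b as [bL bR IHbL IHbR] using game_ind'. intros c.
  induction c as [cL cR IHcL IHcR] using game_ind'.
  rewrite (game_ext (gadd (gadd _ _) _)), (game_ext (gadd (Mk aL aR) (gadd _ _))).
  rewrite !lo_add, !ro_add. cbn [leftOpts rightOpts].
  rewrite !map_app, !map_map, !app_assoc.
  f_equal; (f_equal; [f_equal|]); apply map_ext_in; intros; auto.
Qed.
Fixpoint gsize (g : game) : nat :=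
  match g with Mk L R => S (list_sum (map gsize L) + list_sum (map gsize R)) end.

Lemma in_sum x l : In x l -> gsize x <= list_sum (map gsize l).
Proof. induction l as [|y l IH]; simpl; [tauto|]. intros [<-|H]; [lia|]. specialize (IH H); lia. Qed.

Lemma size_lo x a : In x (leftOpts a) -> gsize x < gsize a.
Proof. destruct a as [L R]; simpl. intros H. pose proof (in_sum x L H). lia. Qed.
Lemma size_ro x a : In x (rightOpts a) -> gsize x < gsize a.
Proof. destruct a as [L R]; simpl. intros H. pose proof (in_sum x R H). lia. Qed.

Definition Q a b c := lf (gadd a (gadd b c)) = lf (gadd b (gadd a c)) /\
                      rf (gadd a (gadd b c)) = rf (gadd b (gadd a c)).

Lemma half a b c (IH : forall a' b' c', gsize a' + gsize b' + gsize c' < gsize a + gsize b + gsize c -> Q a' b' c') :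
  (forall x, In x (leftOpts (gadd a (gadd b c))) -> exists y, In y (leftOpts (gadd b (gadd a c))) /\ rf y = rf x) /\
  (forall x, In x (rightOpts (gadd a (gadd b c))) -> exists y, In y (rightOpts (gadd b (gadd a c))) /\ lf y = lf x).
Proof.
  rewrite !lo_add, !ro_add, !map_app, !map_map.
  split; intros x Hx; rewrite !in_app_iff, !in_map_iff in Hx;
  destruct Hx as [[x' [<- Hx']] | [[x' [<- Hx']] | [x' [<- Hx']]]].
  - exists (gadd b (gadd x' c)). split.
    + rewrite !in_app_iff, !in_map_iff. right; left. eauto.
    + symmetry. apply IH. pose proof (size_lo _ _ Hx'). lia.
  - exists (gadd x' (gadd a c)). split.
    + rewrite !in_app_iff, !in_map_iff. left. eauto.
    + apply IH. pose proof (size_lo _ _ Hx'). lia.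
  - exists (gadd b (gadd a x')). split.
    + rewrite !in_app_iff, !in_map_iff. right; right. eauto.
    + symmetry. apply IH. pose proof (size_lo _ _ Hx'). lia.
  - exists (gadd b (gadd x' c)). split.
    + rewrite !in_app_iff, !in_map_iff. right; left. eauto.
    + symmetry. apply IH. pose proof (size_ro _ _ Hx'). lia.
  - exists (gadd x' (gadd a c)). split.
    + rewrite !in_app_iff, !in_map_iff. left. eauto.
    + apply IH. pose proof (size_ro _ _ Hx'). lia.
  - exists (gadd b (gadd a x')). split.
    + rewrite !in_app_iff, !in_map_iff. right; right. eauto.
    + symmetry. apply IH. pose proof (size_ro _ _ Hx'). lia.
Qed.

Lemma match_iff (f : game -> bool) l1 l2 :
  (forall x, In x l1 -> exists y, In y l2 /\ f y = f x) ->
  (forall y, In y l2 -> exists x, In x l1 /\ f x = f y) ->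
  ((l1 = [] \/ exists x, In x l1 /\ f x = false) <-> (l2 = [] \/ exists y, In y l2 /\ f y = false)).
Proof.
  intros H1 H2. split.
  - intros [E | [x [Hx Fx]]].
    + subst. left. destruct l2 as [|y l2]; auto. destruct (H2 y (or_introl eq_refl)) as [x [[] _]].
    + right. destruct (H1 x Hx) as [y [Hy Fy]]. exists y. rewrite Fy. auto.
  - intros [E | [x [Hx Fx]]].
    + subst. left. destruct l1 as [|y l1]; auto. destruct (H1 y (or_introl eq_refl)) as [x [[] _]].
    + right. destruct (H2 x Hx) as [y [Hy Fy]]. exists y. rewrite Fy. auto.
Qed.

Lemma swapQ a b c : Q a b c.
Proof.
  remember (gsize a + gsize b + gsize c) as n eqn:En.
  revert a b c En. induction n as [n IHn] using (well_founded_induction lt_wf).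
  intros a b c En.
  assert (IH1 : forall a' b' c', gsize a' + gsize b' + gsize c' < gsize a + gsize b + gsize c -> Q a' b' c').
  { intros. eapply IHn; [|reflexivity]. lia. }
  assert (IH2 : forall a' b' c', gsize a' + gsize b' + gsize c' < gsize b + gsize a + gsize c -> Q a' b' c').
  { intros. eapply IHn; [|reflexivity]. lia. }
  destruct (half a b c IH1) as [HL1 HR1]. destruct (half b a c IH2) as [HL2 HR2].
  split; apply eq_true_iff_eq.
  - rewrite (proj1 (char _)), (proj1 (char _)). apply match_iff; auto.
  - rewrite (proj2 (char _)), (proj2 (char _)). apply match_iff; auto.
Qed.
Lemma dead_iff G : left_dead_end G <-> leftOpts G = [] /\ forall x, In x (rightOpts G) -> left_dead_end x.
Proof.
  split.
  - intros H. destruct H. simpl. auto.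
  - destruct G as [L R]; simpl. intros [-> H]. constructor. auto.
Qed.

Lemma dead_add a b : left_dead_end a -> left_dead_end b -> left_dead_end (gadd a b).
Proof.
  revert b. induction a as [aL aR IHaL IHaR] using game_ind'. intros b.
  induction b as [bL bR IHbL IHbR] using game_ind'. intros Ha Hb.
  apply dead_iff in Ha as Ha'. apply dead_iff in Hb as Hb'. cbn [leftOpts rightOpts] in *.
  destruct Ha' as [Ea Ra]; destruct Hb' as [Eb Rb].
  apply dead_iff. rewrite lo_add, ro_add. cbn [leftOpts rightOpts]. rewrite Ea, Eb. split; [reflexivity|].
  intros x Hx. rewrite in_app_iff, !in_map_iff in Hx.
  destruct Hx as [[x' [<- Hx']] | [x' [<- Hx']]].
  - apply IHaR; auto; constructor; auto.
  - rewrite <- Ea. apply IHbR; auto.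
Qed.

Lemma cl_sc A : simply_closed (cl A).
Proof.
  split.
  - intros G H HG Ho S HS HA. apply (proj1 HS G); [apply HG; auto | exact Ho].
  - intros G H HG HH S HS HA. apply (proj2 HS); [apply HG|apply HH]; auto.
Qed.

Lemma cl_dead A : (forall G, A G -> left_dead_end G) -> forall G, cl A G -> left_dead_end G.
Proof.
  intros HA G HG. apply HG; auto. split.
  - intros X Y HX [Ho|Ho]; apply dead_iff in HX; destruct HX as [E R].
    + rewrite E in Ho; destruct Ho.
    + auto.
  - intros; apply dead_add; auto.
Qed.

Definition gefull G H := forall X, outcome_le (o (gadd H X)) (o (gadd G X)).

Lemma dge_full G H : dge G H <-> gefull G H.
Proof.
  split.
  - intros D X. apply (D (fun _ => True)); auto.
    repeat split; auto.
  - intros D U _ X _. apply D.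
Qed.

Lemma ole_iff a b : outcome_le (o a) (o b) <-> ((lf a = true -> lf b = true) /\ (rf b = true -> rf a = true)).
Proof.
  unfold o. destruct (lf a), (rf a), (lf b), (rf b); simpl; intuition congruence.
Qed.

Lemma ole_trans x y z : outcome_le x y -> outcome_le y z -> outcome_le x z.
Proof. destruct x, y, z; simpl; tauto. Qed.

Fixpoint lint n := match n with 0 => Mk [] [] | S m => Mk [lint m] [] end.

Lemma rf_dead_int D : left_dead_end D -> exists n, rf (gadd D (lint n)) = true.
Proof.
  intros HD. induction HD as [R HR IH].
  destruct R as [|r R'].
  - exists 0. apply char. left. reflexivity.
  - destruct (IH r (or_introl eq_refl)) as [n Hn]. exists (S n).
    apply char. right. exists (gadd r (lint (S n))). split.
    + rewrite ro_add. cbn [rightOpts]. apply in_or_app. left. simpl. auto.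
    + apply lf_false. rewrite lo_add. destruct (proj1 (dead_iff r) (HR r (or_introl eq_refl))) as [E _]. rewrite E. cbn. split; [discriminate|].
      intros w [<-|[]]. exact Hn.
Qed.

Lemma collect (P : game -> game -> Prop) (l : list game) :
  (forall h, In h l -> exists y, P h y) ->
  exists ys, (forall h, In h l -> exists y, In y ys /\ P h y) /\
             (forall y, In y ys -> exists h, In h l /\ P h y).
Proof.
  induction l as [|h l IH]; intros Hl.
  - exists []. simpl. split; intros; tauto.
  - destruct (Hl h (or_introl eq_refl)) as [y Hy].
    destruct IH as [ys [H1 H2]]; [intros; apply Hl; simpl; auto|].
    exists (y :: ys). split.
    + intros h' [<-|Hh']. * exists y; simpl; auto. * destruct (H1 h' Hh') as [y' [? ?]]. exists y'; simpl; auto.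
    + intros y' [<-|Hy']. * exists h; simpl; auto. * destruct (H2 y' Hy') as [h' [? ?]]. exists h'; simpl; auto.
Qed.
Lemma maint G H G' : left_dead_end G -> left_dead_end H -> gefull G H -> In G' (rightOpts G) ->
  exists H', In H' (rightOpts H) /\ gefull G' H'.
Proof.
  intros dG dH Hge HG'.
  apply NNPP; intro Hn.
  assert (dG' : left_dead_end G') by (apply (proj2 (proj1 (dead_iff G) dG)); auto).
  assert (Hy : forall h, In h (rightOpts H) -> exists Y, rf (gadd G' Y) = true /\ rf (gadd h Y) = false).
  { intros h Hh. assert (dh : left_dead_end h) by (apply (proj2 (proj1 (dead_iff H) dH)); auto).
    assert (Hng : ~ gefull G' h) by (intro; apply Hn; eauto).
    unfold gefull in Hng. apply not_all_ex_not in Hng. destruct Hng as [X HX].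
    rewrite ole_iff in HX.
    destruct (classic (lf (gadd h X) = true /\ lf (gadd G' X) = false)) as [[E1 E2]|Hc].
    - exists (Mk [] [X]). split.
      + apply char. right. exists (gadd G' X). split; [|exact E2].
        rewrite ro_add. apply in_or_app. right. simpl. auto.
      + apply rf_false. rewrite ro_add. split.
        * intro Hnil. apply app_eq_nil in Hnil. destruct Hnil as [_ Hnil]. discriminate.
        * intros w Hw. rewrite in_app_iff, in_map_iff in Hw.
          destruct Hw as [[w' [<- Hw']] | [<- | []]]; [|exact E1].
          apply char. left. rewrite lo_add.
          destruct (proj1 (dead_iff w') (proj2 (proj1 (dead_iff h) dh) w' Hw')) as [E _].
          rewrite E. reflexivity.
    - destruct (lf (gadd h X)) eqn:E1, (lf (gadd G' X)) eqn:E2, (rf (gadd G' X)) eqn:E3, (rf (gadd h X)) eqn:E4;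
      first [ exists X; split; assumption
            | exfalso; apply HX; split; intros; congruence
            | exfalso; apply Hc; split; congruence ]. }
  destruct (collect (fun h Y => rf (gadd G' Y) = true /\ rf (gadd h Y) = false) (rightOpts H) Hy)
    as [ys [H1 H2]].
  destruct (rf_dead_int G' dG') as [n Hn'].
  specialize (Hge (Mk (lint n :: ys) [Mk [] []])). rewrite ole_iff in Hge. destruct Hge as [_ Hge].
  assert (A1 : rf (gadd G (Mk (lint n :: ys) [Mk [] []])) = true).
  { apply char. right. exists (gadd G' (Mk (lint n :: ys) [Mk [] []])). split.
    - rewrite ro_add. apply in_or_app. left. apply (in_map (fun x => gadd x _)). auto.
    - apply lf_false. rewrite lo_add. destruct (proj1 (dead_iff G') dG') as [E _]. rewrite E.
      cbn [leftOpts map app]. split; [discriminate|].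
      intros w [<-|Hw]; [exact Hn'|]. rewrite in_map_iff in Hw. destruct Hw as [y [<- Hy']].
      destruct (H2 y Hy') as [h [_ [Py _]]]; exact Py. }
  assert (A2 : rf (gadd H (Mk (lint n :: ys) [Mk [] []])) = false).
  { apply rf_false. rewrite ro_add. cbn [rightOpts]. split.
    - intro Hnil. apply app_eq_nil in Hnil. destruct Hnil as [_ Hnil]. discriminate.
    - intros w Hw. rewrite in_app_iff, in_map_iff in Hw.
      destruct Hw as [[h [<- Hh]] | [<- | []]].
      + destruct (H1 h Hh) as [y [Hy' [_ Py]]]. apply char. right. exists (gadd h y). split; [|exact Py].
        rewrite lo_add. apply in_or_app. right. cbn [leftOpts]. apply in_map. right. exact Hy'.
      + apply char. left. rewrite lo_add. destruct (proj1 (dead_iff H) dH) as [E _]. rewrite E. reflexivity. }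
  rewrite (Hge A1) in A2. discriminate.
Qed.

Lemma o_swap a b c : o (gadd a (gadd b c)) = o (gadd b (gadd a c)).
Proof. destruct (swapQ a b c) as [E1 E2]. unfold o. rewrite E1, E2. reflexivity. Qed.

Theorem mainTheorem15 (A : gset) :
  (forall G, A G -> left_dead_end G) -> simply_closed (up A).
Proof.
  intros HA. split.
  - intros G G' [dG [H [HcH Hd]]] Ho.
    assert (dH := cl_dead A HA H HcH).
    destruct Ho as [Ho|Ho].
    + destruct (proj1 (dead_iff G) dG) as [E _]. rewrite E in Ho. destruct Ho.
    + apply dge_full in Hd. destruct (maint G H G' dG dH Hd Ho) as [H' [HH' Hg]].
      split; [apply (proj2 (proj1 (dead_iff G) dG)); auto|].
      exists H'. split; [apply (proj1 (cl_sc A) H); [auto| right; auto] | apply dge_full; auto].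
  - intros G1 G2 [d1 [H1 [c1 g1]]] [d2 [H2 [c2 g2]]].
    split; [apply dead_add; auto|]. exists (gadd H1 H2). split; [apply (proj2 (cl_sc A)); auto|].
    apply dge_full in g1; apply dge_full in g2; apply dge_full. intros X.
    rewrite !gadd_assoc.
    apply ole_trans with (o (gadd H1 (gadd G2 X))).
    + rewrite (o_swap H1 H2 X), (o_swap H1 G2 X). apply g2.
    + apply g1.
Qed.
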